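(* For every half-integer $h\ge\frac12$ and each sign, the complex $\Gamma_{\pm h}$ (see context), depending on $k=\begin{pmatrix}a&b\\c&d\end{pmatrix}\in\mathbb C^{2\times2}\cong\mathbb C^4$, has no homology if $Q=ad-bc\ne0$. If $Q(q)=0$ and $q\ne0$ then its homology $\mathfrak h_q^i$ at $q$ is isomorphic to $\mathbb C$ for $i=1,2$ and is zero for $i\ne1,2$, and every such $q$ is a regular homology point (with respect to $Q$).
   Context: Let $\epsilon=\begin{pmatrix}0&1\\-1&0\end{pmatrix}$, $k^+=k$, $k^-=k^T$. $\Gamma_{\pm h}$ is the complex $S^{2h}\mathbb C^2\to S^{2h-1}\mathbb C^2\otimes\mathbb C^2\to S^{2h-2}\mathbb C^2$ in homological degrees $1,2,3$ (the last term dropped when $h=\frac12$), with first map the linear map $z^{\otimes 2h}\mapsto z^{\otimes(2h-1)}\otimes(k^{\mp}\epsilon z)$ and second map the linear map $z^{\otimes(2h-1)}\otimes y\mapsto (z^T\epsilon k^{\pm}\epsilon y)\,z^{\otimes(2h-2)}$, for $z,y\in\mathbb C^2$. A point $q$ is a regular homology point if $Q(q)=0$, $q$ is a smooth point of $Q=0$, $\dim\mathfrak h_k=\dim\mathfrak h_q$ for all $k$ with $Q(k)=0$ near $q$ (Zariski), and there is $\xi\in T_q\mathbb C^4$ with $\dot Q\ne0$ such that the differential on $\mathfrak h_q$ induced by the derivative $\dot d$ of the differential along $\xi$ at $q$ is exact. *)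

(* Defs.v *)
From HB Require Import structures.
From mathcomp Require Import all_boot all_order all_algebra.
From mathcomp Require Import mpoly.

Set Implicit Arguments.
Unset Strict Implicit.
Unset Printing Implicit Defensive.

Import Order.TTheory GRing.Theory Num.Theory.
Local Open Scope ring_scope.

(*  * k = [[a, b], [c, d]] : 'M_2, with k 0 0 = a, k 0 1 = b, k 1 0 = c,      *)
(*    k 1 1 = d;  vectors z = (z_0, z_1) of C^2.                              *)
(*  * h = (m+1)/2 with m : nat, i.e. n := 2h = m.+1 ranges over n >= 1.       *)
(*  * Sign: [s = true] is Gamma_{+h}, [s = false] is Gamma_{-h}.              *)
(*  * Coordinates on S^p C^2 : 'rV_(p.+1), chosen so that the pure power      *)
(*    z^{(x) p} has coordinates  (z_0^i z_1^(p-i))_(i <= p)  (this is a       *)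
(*    linear isomorphism S^p C^2 ~ C^(p+1): the pure powers span S^p C^2).     *)
(*  * S^p C^2 (x) C^2 : 'rV_(p.+1 + p.+1) = row_mx u_0 u_1, where u_j is the  *)
(*    S^p-component multiplying the j-th basis vector of C^2.  Hence          *)
(*    z^{(x) p} (x) y  has coordinates  row_mx (y_0 *: pw z) (y_1 *: pw z).    *)
(*  * Linear maps act on row vectors from the right:  v |-> v *m D.           *)

Definition epsmx (R : comRingType) : 'M[R]_2 :=
  \matrix_(i < 2, j < 2)
    (if (i == 0) && (j == 1) then 1 else if (i == 1) && (j == 0) then -1 else 0).

Definition pw (R : comRingType) (p : nat) (z : 'rV[R]_2) : 'rV[R]_(p.+1) :=
  \row_(i < p.+1) (z 0 0 ^+ i * z 0 1 ^+ (p - i)).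

Definition shup (R : comRingType) (p q : nat) : 'M[R]_(p, q) :=
  \matrix_(r < p, i < q) ((r : nat) == i.+1)%:R.
Definition shid (R : comRingType) (p q : nat) : 'M[R]_(p, q) :=
  \matrix_(r < p, i < q) ((r : nat) == i)%:R.

(* k^{-+} in the first map and k^{+-} in the second one *)
Definition kfirst (R : comRingType) (s : bool) (k : 'M[R]_2) : 'M[R]_2 :=
  if s then k^T else k.
Definition ksecond (R : comRingType) (s : bool) (k : 'M[R]_2) : 'M[R]_2 :=
  if s then k else k^T.

(* First map  S^(m+1) C^2 -> S^m C^2 (x) C^2,
   z^{(x)(m+1)} |-> z^{(x) m} (x) (M z),  M = k^{-+} eps.
   In coordinates: out_j(i) = M_{j0} in(i+1) + M_{j1} in(i). *)
Definition Gd1 (R : comRingType) (s : bool) (m : nat) (k : 'M[R]_2)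
  : 'M[R]_(m.+2, m.+1 + m.+1) :=
  let M := kfirst s k *m epsmx R in
  row_mx (M 0 0 *: shup R m.+2 m.+1 + M 0 1 *: shid R m.+2 m.+1)
         (M 1 0 *: shup R m.+2 m.+1 + M 1 1 *: shid R m.+2 m.+1).

(* Second map  S^m C^2 (x) C^2 -> S^(m-1) C^2  (zero space when m = 0),
   z^{(x) m} (x) y |-> (z^T N y) z^{(x)(m-1)},  N = eps k^{+-} eps.
   In coordinates: out(i) = sum_b N_{0b} u_b(i+1) + N_{1b} u_b(i). *)
Definition Gd2 (R : comRingType) (s : bool) (m : nat) (k : 'M[R]_2)
  : 'M[R]_(m.+1 + m.+1, m) :=
  let N := epsmx R *m ksecond s k *m epsmx R in
  col_mx (N 0 0 *: shup R m.+1 m + N 1 0 *: shid R m.+1 m)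
         (N 0 1 *: shup R m.+1 m + N 1 1 *: shid R m.+1 m).

Definition Qf (R : comRingType) (k : 'M[R]_2) : R :=
  k 0 0 * k 1 1 - k 0 1 * k 1 0.

Definition kline (C : comRingType) (q xi : 'M[C]_2) : 'M[{poly C}]_2 :=
  map_mx polyC q + 'X *: map_mx polyC xi.

(* directional derivatives at q along xi: coefficient of t in f(q + t xi) *)
Definition dQ (C : comRingType) (q xi : 'M[C]_2) : C :=
  (Qf (kline q xi))`_1.
Definition dGd1 (C : comRingType) s m (q xi : 'M[C]_2) :=
  map_mx (fun p : {poly C} => p`_1) (Gd1 s m (kline q xi)).
Definition dGd2 (C : comRingType) s m (q xi : 'M[C]_2) :=
  map_mx (fun p : {poly C} => p`_1) (Gd2 s m (kline q xi)).

(* Dimension of the homology h^i of a complex C_1 --D1--> C_2 --D2--> C_3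
   (homological degrees 1,2,3; all other chain groups are 0):
   h^i = ker(outgoing map) / im(incoming map). *)
Definition homdim (F : fieldType) (p1 p2 p3 : nat)
  (D1 : 'M[F]_(p1, p2)) (D2 : 'M[F]_(p2, p3)) (i : nat) : nat :=
  match i with
  | 1 => \rank (kermx D1)
  | 2 => \rank (kermx D2) - \rank D1
  | 3 => \rank (1%:M : 'M[F]_p3) - \rank D2
  | _ => 0
  end.

(* The map induced on homology h^1 -> h^2 -> h^3 by E1 : C_1 -> C_2,
   E2 : C_2 -> C_3 is exact (ker = im at h^1, h^2 and h^3), expressed on
   representatives. *)
Definition induced_exact (F : fieldType) (p1 p2 p3 : nat)
  (D1 : 'M[F]_(p1, p2)) (D2 : 'M[F]_(p2, p3))
  (E1 : 'M[F]_(p1, p2)) (E2 : 'M[F]_(p2, p3)) : Prop :=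
  [/\ (* at h^1 :  ker delta_1 = 0 *)
      (forall x : 'rV[F]_p1, x *m D1 = 0 -> (x *m E1 <= D1)%MS -> x = 0),
      (* at h^2 :  ker delta_2 \subset im delta_1 *)
      (forall x : 'rV[F]_p2, x *m D2 = 0 -> (x *m E2 <= D2)%MS ->
         exists2 y : 'rV[F]_p1, y *m D1 = 0 & (x - y *m E1 <= D1)%MS),
      (* at h^2 :  im delta_1 \subset ker delta_2 *)
      (forall y : 'rV[F]_p1, y *m D1 = 0 -> (y *m E1 *m E2 <= D2)%MS)
    & (* at h^3 :  h^3 = ker delta_3 \subset im delta_2 *)
      (forall x : 'rV[F]_p3,
         exists2 y : 'rV[F]_p2, y *m D2 = 0 & (x - y *m E2 <= D2)%MS)].

Definition kcoord (F : ringType) (k : 'M[F]_2) : 'I_4 -> F :=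
  fun i => k (inord (i %/ 2)) (inord (i %% 2)).

Definition Ghomdim (F : fieldType) (s : bool) (m : nat) (k : 'M[F]_2) (i : nat)
  : nat := homdim (Gd1 s m k) (Gd2 s m k) i.

Definition regular_homology_point (F : fieldType) (s : bool) (m : nat)
  (q : 'M[F]_2) : Prop :=
  [/\ Qf q = 0,
      (* q is a smooth point of {Q = 0}: dQ_q <> 0 *)
      (exists xi : 'M[F]_2, dQ q xi != 0),
      (* homology dimensions are constant on {Q = 0} near q (Zariski):
         on the trace of some basic Zariski open set D(f) containing q *)
      (exists f : {mpoly F[4]},
         f.@[kcoord q] != 0 /\
         forall k : 'M[F]_2, Qf k = 0 -> f.@[kcoord k] != 0 ->
           forall i, Ghomdim s m k i = Ghomdim s m q i)
    & (exists xi : 'M[F]_2, dQ q xi != 0 /\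
         induced_exact (Gd1 s m q) (Gd2 s m q) (dGd1 s m q xi) (dGd2 s m q xi))].

(* Main.v *)
Require Import Defs.
From HB Require Import structures.
From mathcomp Require Import all_boot all_order all_algebra.
From mathcomp Require Import mpoly.
From mathcomp Require Import ring lra zify.
Import Order.TTheory GRing.Theory Num.Theory.
Local Open Scope ring_scope.

Module Helpers.
Set Implicit Arguments.
Unset Strict Implicit.


Section Aux.
Variable R : comRingType.

Lemma sum_ind n (F : 'I_n.+1 -> R) k :
  \sum_(l < n.+1) F l * ((l : nat) == k)%:R = if (k < n.+1)%N then F (inord k) else 0.
Proof.
case: ltnP => h.
  rewrite (bigD1 (inord k)) //= inordK // eqxx mulr1 big1 ?addr0 // => l hl.
  case: eqP => [e|]; last by rewrite mulr0.
  by case/eqP: hl; apply: val_inj; rewrite /= inordK.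
rewrite big1 // => l _; case: eqP => [e|]; last by rewrite mulr0.
by move: (ltn_ord l); rewrite e ltnNge h.
Qed.

Definition Bm p (a b : R) : 'M[R]_(p.+1, p) := a *: shup R p.+1 p + b *: shid R p.+1 p.

Lemma BmE' p a b (r : 'I_p.+1) (i : 'I_p) :
  Bm p a b r i = a * ((r : nat) == i.+1)%:R + b * ((r : nat) == i)%:R.
Proof. by rewrite !mxE. Qed.

Lemma BmEm n p a b (x : 'M[R]_(n, p.+1)) r i :
  (x *m Bm p a b) r i = a * x r (inord i.+1) + b * x r (inord i).
Proof.
rewrite mxE; under eq_bigr do rewrite BmE' mulrDr mulrCA [x r _ * (b * _)]mulrCA.
rewrite big_split /= -!mulr_sumr !sum_ind.
by rewrite ltnS ltn_ord ltnS ltnW.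
Qed.

Lemma BmE p a b (x : 'rV[R]_p.+1) i :
  (x *m Bm p a b) 0 i = a * x 0 (inord i.+1) + b * x 0 (inord i).
Proof. exact: BmEm. Qed.

Lemma Bm_prod m a b c d (r : 'I_m.+2) (i : 'I_m) :
  (Bm m.+1 a b *m Bm m c d) r i =
  a * c * ((r : nat) == i.+2)%:R + (a * d + b * c) * ((r : nat) == i.+1)%:R
  + b * d * ((r : nat) == i)%:R.
Proof.
have hi := ltn_ord i.
have h1 : (i.+1 < m.+2)%N by lia.
have h0 : (i < m.+2)%N by lia.
rewrite BmEm !BmE' !inordK //.
move: ((r:nat) == i.+2)%:R ((r:nat) == i.+1)%:R ((r:nat) == i)%:R => e2 e1 e0; ring.
Qed.
 
Lemma epsE (i j : 'I_2) : epsmx R i j =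
  if (i == 0) && (j == 1) then 1 else if (i == 1) && (j == 0) then -1 else 0.
Proof. by rewrite mxE. Qed.

Lemma ME s (k : 'M[R]_2) :
  let M := kfirst s k *m epsmx R in
  [/\ M 0 0 = - kfirst s k 0 1, M 0 1 = kfirst s k 0 0,
      M 1 0 = - kfirst s k 1 1 & M 1 1 = kfirst s k 1 0].
Proof.
have l1 : lift ord0 ord0 = 1 :> 'I_2 by apply: val_inj.
rewrite /= !mxE !big_ord_recl !big_ord0 !mxE /= l1; split; ring.
Qed.

Lemma NE s (k : 'M[R]_2) :
  let N := epsmx R *m ksecond s k *m epsmx R in
  [/\ N 0 0 = - ksecond s k 1 1, N 0 1 = ksecond s k 1 0,
      N 1 0 = ksecond s k 0 1 & N 1 1 = - ksecond s k 0 0].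
Proof.
have l1 : lift ord0 ord0 = 1 :> 'I_2 by apply: val_inj.
rewrite /= !mxE !big_ord_recl !big_ord0 !mxE /= !l1 !big_ord_recl !big_ord0 !mxE /= !l1; split; ring.
Qed.
End Aux.

Section Fld.
Variable F : fieldType.

Lemma rank_ge_unit n p (A : 'M[F]_(p.+1, n)) (P : 'M[F]_(n, p.+1)) :
  (P *m A) \in unitmx -> (n <= \rank A)%N.
Proof.
move=> u; rewrite -{1}(mxrank_unit u); exact: mxrankM_maxr.
Qed.

Lemma rank_Bm p (a b : F) : (a != 0) || (b != 0) -> \rank (Bm p a b) = p.
Proof.
move=> hab; apply/eqP; rewrite eqn_leq rank_leq_col /=.
case: (eqVneq b 0) => hb.
  have ha : a != 0 by move: hab; rewrite hb eqxx orbF.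
  pose P := \matrix_(r < p, j < p.+1) ((j : nat) == r.+1)%:R : 'M[F]_(p, p.+1).
  have SE : forall r i, (P *m Bm p a b) r i = a * ((r : nat) == i)%:R + b * (r.+1 == i)%:R.
    move=> r i; rewrite mxE; under eq_bigr do rewrite mxE mulrC.
    have hr := ltn_ord r; have h1 : (r.+1 < p.+1)%N by lia.
    by rewrite sum_ind h1 BmE' inordK // eqSS.
  apply: (@rank_ge_unit _ _ _ P); rewrite unitmxE -det_tr det_trig.
    under eq_bigr do rewrite mxE SE eqxx hb mul0r addr0 mulr1.
    by rewrite prodr_const card_ord unitfE expf_neq0.
  apply/is_trig_mxP => r i lt; rewrite mxE SE hb mul0r addr0.
  by rewrite gtn_eqF // mulr0.
pose P := \matrix_(r < p, j < p.+1) ((j : nat) == r)%:R : 'M[F]_(p, p.+1).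
have SE : forall r i, (P *m Bm p a b) r i = a * ((r : nat) == i.+1)%:R + b * ((r:nat) == i)%:R.
  move=> r i; rewrite mxE; under eq_bigr do rewrite mxE mulrC.
  have hr := ltn_ord r; have h1 : (r < p.+1)%N by lia.
  by rewrite sum_ind h1 BmE' inordK.
apply: (@rank_ge_unit _ _ _ P); rewrite unitmxE det_trig.
  under eq_bigr do rewrite SE eqxx (ltn_eqF (ltnSn _)) mulr0 add0r mulr1.
  by rewrite prodr_const card_ord unitfE expf_neq0.
apply/is_trig_mxP => r i lt; by rewrite SE (ltn_eqF lt) (ltn_eqF (leqW lt)) !mulr0 addr0.
Qed.
Lemma Bm_inj p (a b c d : F) (x : 'rV[F]_p.+2) :
  x *m Bm p.+1 a b = 0 -> x *m Bm p.+1 c d = 0 -> a * d - b * c != 0 -> x = 0.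
Proof.
move=> /rowP e1 /rowP e2 hD; apply/rowP => j; rewrite mxE.
have E : forall i : 'I_p.+1, a * x 0 (inord i.+1) + b * x 0 (inord i) = 0 /\ c * x 0 (inord i.+1) + d * x 0 (inord i) = 0.
  by move=> i; move: (e1 i) (e2 i); rewrite !BmE !mxE.
have hj := ltn_ord j.
case: (ltnP j p.+1) => hjp.
  have [E1 E2] := E (Ordinal hjp).
  have -> : x 0 j = x 0 (inord (Ordinal hjp)) by congr (x 0 _); apply: val_inj; rewrite /= inordK //; lia.
  set X1 := x 0 (inord (Ordinal hjp).+1) in E1 E2; set X0 := x 0 (inord (Ordinal hjp)) in E1 E2 *.
  have : (a * d - b * c) * X0 = a * (c * X1 + d * X0) - c * (a * X1 + b * X0) by ring.
  by rewrite E1 E2 !mulr0 subrr => /eqP; rewrite mulf_eq0 (negbTE hD) => /eqP.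
have [E1 E2] := E ord_max.
have -> : x 0 j = x 0 (inord (@ord_max p).+1) by congr (x 0 _); apply: val_inj; rewrite /= inordK //; lia.
set X0 := x 0 (inord (nat_of_ord ord_max)) in E1 E2; set X1 := x 0 (inord _) in E1 E2 *.
have : (a * d - b * c) * X1 = d * (a * X1 + b * X0) - b * (c * X1 + d * X0) by ring.
by rewrite E1 E2 !mulr0 subrr => /eqP; rewrite mulf_eq0 (negbTE hD) => /eqP.
Qed.

Lemma Bm_ker p (a b : F) : (a != 0) || (b != 0) ->
  exists2 g : 'rV[F]_p.+1, g != 0 & forall c d, a * d - b * c = 0 -> g *m Bm p c d = 0.
Proof.
move=> hab; exists (\row_(j < p.+1) ((- b) ^+ j * a ^+ (p - j))).
  case: (eqVneq a 0) => ha.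
    have hb : b != 0 by move: hab; rewrite ha eqxx.
    apply/eqP => /rowP /(_ ord_max); rewrite !mxE /= subnn expr0 mulr1 => /eqP.
    by rewrite expf_eq0 oppr_eq0 (negbTE hb) andbF.
  apply/eqP => /rowP /(_ ord0); rewrite !mxE /= subn0 expr0 mul1r => /eqP.
  by rewrite expf_eq0 (negbTE ha) andbF.
move=> c d h; apply/rowP => i; rewrite BmE !mxE.
have hi := ltn_ord i.
rewrite !inordK; try lia.
have -> : (p - i = (p - i.+1).+1)%N by lia.
rewrite !exprS.
have -> : c * (- b * (- b) ^+ i * a ^+ (p - i.+1)) + d * ((- b) ^+ i * (a * a ^+ (p - i.+1)))
  = (- b) ^+ i * a ^+ (p - i.+1) * (a * d - b * c) by ring.
by rewrite h mulr0.
Qed.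
End Fld.



Section Gd.
Variable R : comRingType.

Lemma Gd1E s m (k : 'M[R]_2) : Gd1 s m k =
  row_mx (Bm m.+1 (- kfirst s k 0 1) (kfirst s k 0 0))
         (Bm m.+1 (- kfirst s k 1 1) (kfirst s k 1 0)).
Proof. by rewrite /Gd1; have [-> -> -> ->] := ME s k. Qed.

Lemma Gd2E s m (k : 'M[R]_2) : Gd2 s m k =
  col_mx (Bm m (- ksecond s k 1 1) (ksecond s k 0 1))
         (Bm m (ksecond s k 1 0) (- ksecond s k 0 0)).
Proof. by rewrite /Gd2; have [-> -> -> ->] := NE s k. Qed.

Lemma Qf_first s (k : 'M[R]_2) :
  Qf k = kfirst s k 0 0 * kfirst s k 1 1 - kfirst s k 0 1 * kfirst s k 1 0.
Proof. by case: s; rewrite /Qf /kfirst ?mxE //; ring. Qed.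

Lemma Qf_second s (k : 'M[R]_2) :
  Qf k = ksecond s k 0 0 * ksecond s k 1 1 - ksecond s k 0 1 * ksecond s k 1 0.
Proof. by case: s; rewrite /Qf /ksecond ?mxE //; ring. Qed.

Lemma ord2 (i : 'I_2) : i = 0 \/ i = 1.
Proof. by case: i => [[|[|]]] //= ?; [left|right]; apply: val_inj. Qed.

Lemma nz_entries (k : 'M[R]_2) : k != 0 ->
  [|| k 0 0 != 0, k 0 1 != 0, k 1 0 != 0 | k 1 1 != 0].
Proof.
apply: contraR; rewrite !negb_or !negbK => /and4P [/eqP h1 /eqP h2 /eqP h3 /eqP h4].
apply/eqP/matrixP => i j; rewrite mxE.
by case: (ord2 i) => ->; case: (ord2 j) => ->.
Qed.

Lemma kfirst_nz s (k : 'M[R]_2) : k != 0 -> kfirst s k != 0.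
Proof. by case: s => //= ; apply: contra => /eqP h; rewrite -[k]trmxK h trmx0. Qed.
Lemma ksecond_nz s (k : 'M[R]_2) : k != 0 -> ksecond s k != 0.
Proof. by case: s => //= ; apply: contra => /eqP h; rewrite -[k]trmxK h trmx0. Qed.

End Gd.

Section GdF.
Variable F : fieldType.

Lemma rank_rowl m n1 n2 (A : 'M[F]_(m, n1)) (B : 'M[F]_(m, n2)) :
  (\rank A <= \rank (row_mx A B))%N.
Proof.
have e : row_mx A B *m col_mx 1%:M 0 = A by rewrite mul_row_col mulmx1 mulmx0 addr0.
rewrite -{1}e.
exact: mxrankM_maxl.
Qed.
Lemma rank_rowr m n1 n2 (A : 'M[F]_(m, n1)) (B : 'M[F]_(m, n2)) :
  (\rank B <= \rank (row_mx A B))%N.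
Proof.
have e : row_mx A B *m col_mx 0 1%:M = B by rewrite mul_row_col mulmx1 mulmx0 add0r.
rewrite -{1}e.
exact: mxrankM_maxl.
Qed.
Lemma rank_colu m1 m2 n (A : 'M[F]_(m1, n)) (B : 'M[F]_(m2, n)) :
  (\rank A <= \rank (col_mx A B))%N.
Proof.
have e : row_mx 1%:M 0 *m col_mx A B = A by rewrite mul_row_col mul1mx mul0mx addr0.
rewrite -{1}e.
exact: mxrankM_maxr.
Qed.
Lemma rank_cold m1 m2 n (A : 'M[F]_(m1, n)) (B : 'M[F]_(m2, n)) :
  (\rank B <= \rank (col_mx A B))%N.
Proof.
have e : row_mx 0 1%:M *m col_mx A B = B by rewrite mul_row_col mul1mx mul0mx add0r.
rewrite -{1}e.
exact: mxrankM_maxr.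
Qed.

Lemma rank_Gd2 s m (k : 'M[F]_2) : k != 0 -> \rank (Gd2 s m k) = m.
Proof.
move=> /(ksecond_nz s) /nz_entries h.
apply/eqP; rewrite eqn_leq rank_leq_col /= Gd2E.
set e00 := ksecond s k 0 0 in h *; set e01 := ksecond s k 0 1 in h *.
set e10 := ksecond s k 1 0 in h *; set e11 := ksecond s k 1 1 in h *.
case/or4P: h => h.
- by rewrite -{1}(@rank_Bm _ m e10 (- e00)) ?rank_cold // oppr_eq0 h orbT.
- by rewrite -{1}(@rank_Bm _ m (- e11) e01) ?rank_colu // h orbT.
- by rewrite -{1}(@rank_Bm _ m e10 (- e00)) ?rank_cold // h.
- by rewrite -{1}(@rank_Bm _ m (- e11) e01) ?rank_colu // oppr_eq0 h.
Qed.

Lemma Gd1_free s m (k : 'M[F]_2) : Qf k != 0 -> \rank (Gd1 s m k) = m.+2.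
Proof.
move=> hQ; have: row_free (Gd1 s m k); last by move/eqnP.
apply: inj_row_free => x; rewrite Gd1E mul_mx_row => /eqP; rewrite -row_mx0 => /eqP.
case/eq_row_mx => h1 h2; apply: (Bm_inj h1 h2).
by rewrite (Qf_first s) in hQ; move: hQ; congr (_ != _); ring.
Qed.

Lemma Gd1_sing s m (k : 'M[F]_2) : Qf k = 0 -> k != 0 ->
  \rank (Gd1 s m k) = m.+1 /\
  exists2 g : 'rV[F]_m.+2, g != 0 & g *m Gd1 s m k = 0.
Proof.
move=> hQ /(kfirst_nz s) /nz_entries h; rewrite (Qf_first s) in hQ.
rewrite Gd1E.
set e00 := kfirst s k 0 0 in h hQ *; set e01 := kfirst s k 0 1 in h hQ *.
set e10 := kfirst s k 1 0 in h hQ *; set e11 := kfirst s k 1 1 in h hQ *.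
have q1 : (- e01) * e10 - e00 * (- e11) = 0 by rewrite -hQ; ring.
have q2 : (- e11) * e00 - e10 * (- e01) = 0 by rewrite -[RHS]oppr0 -hQ; ring.
have r1 : forall a b : F, a * b - b * a = 0 by move=> a b; ring.
have [g gnz gK] : exists2 g : 'rV[F]_m.+2, g != 0 &
     g *m row_mx (Bm m.+1 (- e01) e00) (Bm m.+1 (- e11) e10) = 0.
  have [h0|h1] : ((- e01 != 0) || (e00 != 0)) \/ ((- e11 != 0) || (e10 != 0)).
    - case/or4P: h => hh; [left; by rewrite hh orbT | left; by rewrite oppr_eq0 hh | right; by rewrite hh orbT | right; by rewrite oppr_eq0 hh].
    - have [g gnz gK] := @Bm_ker _ m.+1 _ _ h0; exists g => //.
      by rewrite mul_mx_row (gK _ _ (r1 _ _)) (gK _ _ q1) row_mx0.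
    - have [g gnz gK] := @Bm_ker _ m.+1 _ _ h1; exists g => //.
      by rewrite mul_mx_row (gK _ _ (r1 _ _)) (gK _ _ q2) row_mx0.
split; last by exists g.
apply/eqP; rewrite eqn_leq; apply/andP; split.
  rewrite -ltnS ltn_neqAle rank_leq_row andbT; apply/negP => /eqP hr.
  have rf : row_free (row_mx (Bm m.+1 (- e01) e00) (Bm m.+1 (- e11) e10)) by apply/eqnP.
  by move/eqP: gK; rewrite mulmx_free_eq0 // (negbTE gnz).
case/or4P: h => h.
- by apply: (leq_trans _ (rank_rowl _ _)); rewrite rank_Bm // h orbT.
- by apply: (leq_trans _ (rank_rowl _ _)); rewrite rank_Bm // oppr_eq0 h.
- by apply: (leq_trans _ (rank_rowr _ _)); rewrite rank_Bm // h orbT.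
- by apply: (leq_trans _ (rank_rowr _ _)); rewrite rank_Bm // oppr_eq0 h.
Qed.

End GdF.



Section Comp.
Variable R : comRingType.

Lemma GdprodE s m (k1 k2 : 'M[R]_2) r i :
  (Gd1 s m k1 *m Gd2 s m k2) r i =
  let kf := kfirst s k1 in let ks := ksecond s k2 in
  (kf 0 1 * ks 1 1 - kf 1 1 * ks 1 0) * ((r : nat) == i.+2)%:R
  + (- kf 0 1 * ks 0 1 - kf 0 0 * ks 1 1 + kf 1 1 * ks 0 0 + kf 1 0 * ks 1 0)
     * ((r : nat) == i.+1)%:R
  + (kf 0 0 * ks 0 1 - kf 1 0 * ks 0 0) * ((r : nat) == i)%:R.
Proof.
rewrite Gd1E Gd2E mul_row_col mxE !Bm_prod /=.
move: ((r:nat) == i.+2)%:R ((r:nat) == i.+1)%:R ((r:nat) == i)%:R => e2 e1 e0; ring.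
Qed.

Lemma Gd_comp s m (k : 'M[R]_2) : Gd1 s m k *m Gd2 s m k = 0.
Proof.
apply/matrixP => r i; rewrite GdprodE [RHS]mxE /=.
move: ((r:nat) == i.+2)%:R ((r:nat) == i.+1)%:R ((r:nat) == i)%:R => e2 e1 e0.
case: s; rewrite /kfirst /ksecond ?mxE; ring.
Qed.

Lemma Gd_comp2 s m (k1 k2 : 'M[R]_2) :
  Gd1 s m k1 *m Gd2 s m k2 + Gd1 s m k2 *m Gd2 s m k1 = 0.
Proof.
apply/matrixP => r i; rewrite mxE !GdprodE [RHS]mxE /=.
move: ((r:nat) == i.+2)%:R ((r:nat) == i.+1)%:R ((r:nat) == i)%:R => e2 e1 e0.
case: s; rewrite /kfirst /ksecond ?mxE; ring.
Qed.

End Comp.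



Section Deriv.
Variable C : comRingType.

Lemma coef_lin (a b : C) i : (a%:P + 'X * b%:P)`_i =
  if i == 0%N then a else if i == 1%N then b else 0.
Proof.
rewrite coefD coefC coefXM coefC; case: i => [|[|i]] //=; by rewrite ?addr0 ?add0r.
Qed.

Lemma klineE (q xi : 'M[C]_2) i j : kline q xi i j = (q i j)%:P + 'X * (xi i j)%:P.
Proof. by rewrite !mxE. Qed.

Lemma kfirst_kline s (q xi : 'M[C]_2) i j :
  (kfirst s (kline q xi) i j)`_1 = kfirst s xi i j.
Proof. case: s; rewrite /kfirst /=; [rewrite [(kline _ _)^T _ _]mxE [xi^T _ _]mxE|]; by rewrite klineE coef_lin. Qed.
Lemma ksecond_kline s (q xi : 'M[C]_2) i j :
  (ksecond s (kline q xi) i j)`_1 = ksecond s xi i j.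
Proof. case: s; rewrite /ksecond /=; [|rewrite [(kline _ _)^T _ _]mxE [xi^T _ _]mxE]; by rewrite klineE coef_lin. Qed.

Lemma map_Bm p (a b : {poly C}) :
  map_mx (fun x : {poly C} => x`_1) (Bm p a b) = Bm p a`_1 b`_1.
Proof.
by apply/matrixP => r c; rewrite mxE !BmE' coefD !mulr_natr !coefMn.
Qed.

Lemma dGd1E s m (q xi : 'M[C]_2) : dGd1 s m q xi = Gd1 s m xi.
Proof.
by rewrite /dGd1 Gd1E map_row_mx !map_Bm Gd1E !coefN !kfirst_kline.
Qed.

Lemma dGd2E s m (q xi : 'M[C]_2) : dGd2 s m q xi = Gd2 s m xi.
Proof.
by rewrite /dGd2 Gd2E map_col_mx !map_Bm Gd2E !coefN !ksecond_kline.
Qed.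

Lemma coef1_prod (a b c d : C) :
  ((a%:P + 'X * b%:P) * (c%:P + 'X * d%:P))`_1 = a * d + b * c.
Proof.
rewrite coefM big_ord_recr big_ord1 /= !coef_lin /=; ring.
Qed.

Lemma dQE (q xi : 'M[C]_2) :
  dQ q xi = q 0 0 * xi 1 1 + xi 0 0 * q 1 1 - q 0 1 * xi 1 0 - xi 0 1 * q 1 0.
Proof.
rewrite /dQ /Qf !klineE coefB !coef1_prod; ring.
Qed.

End Deriv.



Section Step.
Variable F : fieldType.

Lemma Bm_dep p (a b c d : F) (x : 'rV[F]_p.+2) : x != 0 ->
  x *m Bm p.+1 a b = 0 -> x *m Bm p.+1 c d = 0 -> a * d - b * c = 0.
Proof.
move=> hx h1 h2; apply/eqP; apply: contraNT hx => hD; apply/eqP; exact: Bm_inj h1 h2 hD.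
Qed.

Lemma step1 s m (q xi : 'M[F]_2) (x y : 'rV[F]_m.+2) :
  Qf q = 0 -> q != 0 -> dQ q xi != 0 ->
  x *m Gd1 s m q = 0 -> x *m Gd1 s m xi = y *m Gd1 s m q -> x = 0.
Proof.
move=> hQ qnz hd.
have hd' : kfirst s q 0 0 * kfirst s xi 1 1 + kfirst s xi 0 0 * kfirst s q 1 1
         - kfirst s q 0 1 * kfirst s xi 1 0 - kfirst s xi 0 1 * kfirst s q 1 0 != 0.
  by move: hd; rewrite dQE; case: s; rewrite /kfirst /= ?mxE; congr (_ != _); ring.
move=> h1 h2; apply/eqP; apply/negPn/negP => hx.
have hf := nz_entries (kfirst_nz s qnz).
rewrite (Qf_first s) in hQ.
move: h1 h2; rewrite !Gd1E !mul_mx_row -[X in _ = X -> _]row_mx0 => /eq_row_mx [h1a h1b] /eq_row_mx [h2a h2b].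
move: hQ hd' hf h1a h1b h2a h2b.
set f00 := kfirst s q 0 0; set f01 := kfirst s q 0 1.
set f10 := kfirst s q 1 0; set f11 := kfirst s q 1 1.
set g00 := kfirst s xi 0 0; set g01 := kfirst s xi 0 1.
set g10 := kfirst s xi 1 0; set g11 := kfirst s xi 1 1.
move=> hQ hd' hf h1a h1b h2a h2b.
set Dm := (X in X != 0) in hd'.
set Q := f00 * f11 - f01 * f10 in hQ.
have hw1 : x *m Bm m.+1 (- f11 * - g01 + f01 * - g11) (- f11 * g00 + f01 * g10) = 0.
  apply/rowP => i; move/rowP: h2a => /(_ i); move/rowP: h2b => /(_ i).
  rewrite !BmE !mxE => e2 e1.
  transitivity (- f11 * (- g01 * x 0 (inord i.+1) + g00 * x 0 (inord i))
                + f01 * (- g11 * x 0 (inord i.+1) + g10 * x 0 (inord i))); first ring.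
  rewrite e1 e2; transitivity (- Q * y 0 (inord i)); first (rewrite /Q; ring).
  by rewrite hQ oppr0 mul0r.
have hw2 : x *m Bm m.+1 (f10 * - g01 - f00 * - g11) (f10 * g00 - f00 * g10) = 0.
  apply/rowP => i; move/rowP: h2a => /(_ i); move/rowP: h2b => /(_ i).
  rewrite !BmE !mxE => e2 e1.
  transitivity (f10 * (- g01 * x 0 (inord i.+1) + g00 * x 0 (inord i))
                - f00 * (- g11 * x 0 (inord i.+1) + g10 * x 0 (inord i))); first ring.
  rewrite e1 e2; transitivity (Q * y 0 (inord i.+1)); first (rewrite /Q; ring).
  by rewrite hQ mul0r.
have d1 := Bm_dep hx h1a hw1.
have d2 := Bm_dep hx h1b hw1.
have d3 := Bm_dep hx h1a hw2.
have d4 := Bm_dep hx h1b hw2.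
have E1 : f01 * Dm = 0.
  transitivity (- f01 * (- f11 * g00 + f01 * g10) - f00 * (- f11 * - g01 + f01 * - g11) + g01 * Q).
    by rewrite /Dm /Q; ring.
  by rewrite d1 hQ mulr0 addr0.
have E2 : f11 * Dm = 0.
  transitivity (- f11 * (- f11 * g00 + f01 * g10) - f10 * (- f11 * - g01 + f01 * - g11) + g11 * Q).
    by rewrite /Dm /Q; ring.
  by rewrite d2 hQ mulr0 addr0.
have E3 : f00 * Dm = 0.
  transitivity (- (- f01 * (f10 * g00 - f00 * g10) - f00 * (f10 * - g01 - f00 * - g11)) + g00 * Q).
    by rewrite /Dm /Q; ring.
  by rewrite d3 hQ mulr0 addr0 oppr0.
have E4 : f10 * Dm = 0.
  transitivity (- (- f11 * (f10 * g00 - f00 * g10) - f10 * (f10 * - g01 - f00 * - g11)) + g10 * Q).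
    by rewrite /Dm /Q; ring.
  by rewrite d4 hQ mulr0 addr0 oppr0.
case/or4P: hf => hh.
- by move/eqP: E3; rewrite mulf_eq0 (negbTE hh) (negbTE hd').
- by move/eqP: E1; rewrite mulf_eq0 (negbTE hh) (negbTE hd').
- by move/eqP: E4; rewrite mulf_eq0 (negbTE hh) (negbTE hd').
- by move/eqP: E2; rewrite mulf_eq0 (negbTE hh) (negbTE hd').
Qed.

End Step.



Section Main.
Variable F : fieldType.

Lemma Qf0 : Qf (0 : 'M[F]_2) = 0.
Proof. by rewrite /Qf !mxE mulr0 subrr. Qed.

Lemma hom_ns s m (k : 'M[F]_2) : Qf k != 0 -> forall i, Ghomdim s m k i = 0%N.
Proof.
move=> hQ; have knz : k != 0 by apply: contraNneq hQ => ->; rewrite Qf0.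
case=> [|[|[|[|i]]]] //; rewrite /Ghomdim /homdim.
- by rewrite mxrank_ker Gd1_free // subnn.
- rewrite mxrank_ker Gd1_free // rank_Gd2 //; lia.
- by rewrite mxrank1 rank_Gd2 // subnn.
Qed.

Lemma hom_s s m (k : 'M[F]_2) : Qf k = 0 -> k != 0 ->
  forall i, Ghomdim s m k i = (if (i == 1)%N || (i == 2)%N then 1 else 0)%N.
Proof.
move=> hQ knz; have [r1 _] := Gd1_sing s m hQ knz.
case=> [|[|[|[|i]]]] //; rewrite /Ghomdim /homdim.
- by rewrite mxrank_ker r1 /=; lia.
- rewrite mxrank_ker r1 rank_Gd2 // /=; lia.
- by rewrite mxrank1 rank_Gd2 // subnn.
Qed.

Lemma neq_eq (a b : F) : a = b -> b != 0 -> a != 0.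
Proof. by move=> ->. Qed.

Lemma exists_xi (q : 'M[F]_2) : q != 0 -> exists xi, dQ q xi != 0.
Proof.
move=> /nz_entries; case/or4P => h.
- by exists (delta_mx 1 1); rewrite dQE !mxE /=; apply: (neq_eq _ h); ring.
- exists (delta_mx 1 0); rewrite dQE !mxE /=; apply: (@neq_eq _ (- q 0 1)); first ring.
  by rewrite oppr_eq0.
- exists (delta_mx 0 1); rewrite dQE !mxE /=; apply: (@neq_eq _ (- q 1 0)); first ring.
  by rewrite oppr_eq0.
- by exists (delta_mx 0 0); rewrite dQE !mxE /=; apply: (neq_eq _ h); ring.
Qed.

Lemma kcoordE (k : 'M[F]_2) (a b : 'I_2) : kcoord k (inord (2 * a + b)) = k a b.
Proof.
have ha := ltn_ord a; have hb := ltn_ord b.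
rewrite /kcoord inordK; last lia.
congr (k _ _); apply: val_inj; rewrite /= inordK; lia.
Qed.

Lemma zariski s m (q : 'M[F]_2) : Qf q = 0 -> q != 0 ->
  exists f : {mpoly F[4]},
    f.@[kcoord q] != 0 /\
    forall k : 'M[F]_2, Qf k = 0 -> f.@[kcoord k] != 0 ->
      forall i, Ghomdim s m k i = Ghomdim s m q i.
Proof.
move=> hQ qnz.
have [a [b hab]] : exists a b, q a b != 0.
  move/nz_entries: qnz; case/or4P => h; [exists 0, 0 | exists 0, 1 | exists 1, 0 | exists 1, 1]; done.
exists 'X_(inord (2 * a + b)); split; first by rewrite mevalXU kcoordE.
move=> k hk; rewrite mevalXU kcoordE => kab i.
have knz : k != 0 by apply: contraNneq kab => ->; rewrite mxE.
by rewrite !hom_s.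
Qed.

Lemma exact_at s m (q xi : 'M[F]_2) : Qf q = 0 -> q != 0 -> dQ q xi != 0 ->
  induced_exact (Gd1 s m q) (Gd2 s m q) (Gd1 s m xi) (Gd2 s m xi).
Proof.
move=> hQ qnz hd.
have [r1 [g gnz gK]] := Gd1_sing s m hQ qnz.
have r2 := rank_Gd2 s m qnz.
have full2 : row_full (Gd2 s m q) by rewrite /row_full r2.
have ex1 : forall x : 'rV_m.+2, x *m Gd1 s m q = 0 ->
    (x *m Gd1 s m xi <= Gd1 s m q)%MS -> x = 0.
  move=> x h1 /submxP [y hy]; exact: step1 hQ qnz hd h1 hy.
split => //.
- move=> x hx _.
  set D1 := Gd1 s m q in r1 gK ex1 *; set D2 := Gd2 s m q in r2 full2 *.
  set E1 := Gd1 s m xi in ex1 *.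
  have gE : ~~ (g *m E1 <= D1)%MS by apply: contra gnz => h; apply/eqP; exact: ex1 gK h.
  set S := (D1 + g *m E1)%MS.
  have sD1K : (D1 <= kermx D2)%MS by rewrite sub_kermx Gd_comp.
  have sgK : (g *m E1 <= kermx D2)%MS.
    rewrite sub_kermx -mulmxA; apply/eqP.
    have := Gd_comp2 s m xi q; move/(congr1 (mulmx g)).
    by rewrite mulmxDr mulmx0 !mulmxA gK mul0mx addr0.
  have sSK : (S <= kermx D2)%MS by rewrite addsmx_sub sD1K sgK.
  have rS : (m.+2 <= \rank S)%N.
    have lt : (D1 < S)%MS.
      rewrite ltmxE addsmxSl /=.
      by apply: contra gE => h; apply: submx_trans h; exact: addsmxSr.
    by have := rank_ltmx lt; rewrite r1.
  have sKS : (kermx D2 <= S)%MS.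
    rewrite -(mxrank_leqif_sup sSK).2 eqn_leq mxrankS //=.
    rewrite mxrank_ker r2; apply: leq_trans rS; lia.
  have xK : (x <= kermx D2)%MS by rewrite sub_kermx hx.
  have /sub_addsmxP [u hu] := submx_trans xK sKS.
  exists (u.2 *m g); first by rewrite -mulmxA gK mulmx0.
  by rewrite hu -!mulmxA addrK submxMl.
- by move=> y _; exact: submx_full.
- by move=> x; exists 0; [rewrite mul0mx | exact: submx_full].
Qed.

Lemma regular s m (q : 'M[F]_2) : Qf q = 0 -> q != 0 -> regular_homology_point s m q.
Proof.
move=> hQ qnz; have [xi hxi] := exists_xi qnz.
split => //; first by exists xi.
  exact: zariski.
exists xi; split => //; rewrite dGd1E dGd2E; exact: exact_at.
Qed.

End Main.


End Helpers.
Import Helpers.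

(* h = (m+1)/2 ranges over the half-integers >= 1/2; s = true : Gamma_{+h},
   s = false : Gamma_{-h}. *)
Theorem mainTheorem7 (C : numClosedFieldType) (m : nat) (s : bool) :
  (forall k : 'M[C]_2, Qf k != 0 -> forall i : nat, Ghomdim s m k i = 0%N) /\
  (forall q : 'M[C]_2, Qf q = 0 -> q != 0 ->
     (forall i : nat, Ghomdim s m q i = (if (i == 1)%N || (i == 2)%N then 1 else 0)%N)
     /\ regular_homology_point s m q).
Proof.
split; first exact: hom_ns.
move=> q hQ qnz; split; [exact: hom_s | exact: regular].
Qed.
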